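(* There is a constant $C>0$ such that the following holds. Let $p,p',q,q'\in M$ with $p'\in[p,\xi_+)$, $q'\in[q,\xi_+)$, $h(p')=h(q')=y$ and $|p'-q'|_y=1$. Then $$\mathrm{dist}(p,p')+\mathrm{dist}(q,q')\le\mathrm{dist}(p,q)+C.$$
   Context: Let $d\ge1$, $0<\lambda_1\le\cdots\le\lambda_d$, and $M$ be $\mathbb{R}^{d+1}$ with coordinates $(y,x)=(y,x_1,\dots,x_d)$ and metric $g=dy^2+\sum_{i=1}^d e^{-2\lambda_i y}dx_i^2$; $\mathrm{dist}$ is its Riemannian distance. Write $h(y,x)=y$. For $p=(y_p,x_p)$, $[p,\xi_+)$ denotes the vertical geodesic ray $\{(y_p+s,x_p):s\ge0\}$. For $u\in\mathbb{R}^d$ and $y\in\mathbb{R}$, $|u|_y=(\sum_{i=1}^d e^{-2\lambda_iy}u_i^2)^{1/2}$, and for points $p=(y,x)$, $\hat p=(y,\hat x)$ at the same height, $|p-\hat p|_y:=|x-\hat x|_y$ (the distance in the flat level set $\{y\}\times\mathbb{R}^d$). *)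

(* Defs.v *)
From Stdlib Require Import Reals Lra.
From Coquelicot Require Import Coquelicot.
Open Scope R_scope.

Fixpoint sum_lt (n : nat) (f : nat -> R) : R :=
  match n with O => 0 | S m => sum_lt m f + f m end.

(* A point of M = R^{d+1}: height y and horizontal coordinates x_0..x_{d-1}
   (only indices i < d are meaningful). *)
Record point := Pt { py : R ; px : nat -> R }.

Definition h (p : point) : R := py p.

Definition hnorm (d : nat) (lam : nat -> R) (y : R) (u : nat -> R) : R :=
  sqrt (sum_lt d (fun i => exp (-2 * lam i * y) * (u i)^2)).

Definition hdist (d : nat) (lam : nat -> R) (y : R) (p q : point) : R :=
  hnorm d lam y (fun i => px p i - px q i).

Definition C1 (f : R -> R) : Prop :=
  (forall t, ex_derive f t) /\ (forall t, continuous (Derive f) t).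

Definition curve_from_to (d : nat) (cy : R -> R) (cx : nat -> R -> R)
  (p q : point) : Prop :=
  C1 cy /\ (forall i, (i < d)%nat -> C1 (cx i)) /\
  cy 0 = py p /\ cy 1 = py q /\
  (forall i, (i < d)%nat -> cx i 0 = px p i /\ cx i 1 = px q i).

(* Riemannian length for g = dy^2 + sum_i e^{-2 lam_i y} dx_i^2 *)
Definition curve_length (d : nat) (lam : nat -> R) (cy : R -> R)
  (cx : nat -> R -> R) : R :=
  RInt (fun t => sqrt ((Derive cy t)^2 +
          sum_lt d (fun i => exp (-2 * lam i * cy t) * (Derive (cx i) t)^2)))
       0 1.

Definition rdist (d : nat) (lam : nat -> R) (p q : point) : R :=
  real (Glb_Rbar (fun L => exists cy cx,
          curve_from_to d cy cx p q /\ L = curve_length d lam cy cx)).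

(* p' lies on the vertical geodesic ray [p, xi_+) *)
Definition on_ray (d : nat) (p p' : point) : Prop :=
  exists s, 0 <= s /\ py p' = py p + s /\
    (forall i, (i < d)%nat -> px p' i = px p i).

(* Main.v *)
Require Import Defs.
From Stdlib Require Import Reals Lra Psatz Classical.
From Coquelicot Require Import Coquelicot.
Open Scope R_scope.
From Coquelicot Require Import Coquelicot.

Lemma le_sqrt_of_sq (x y : R) : 0 <= y -> x^2 <= y -> x <= sqrt y.
Proof.
  intros Hy Hx. destruct (Rle_dec x 0) as [H|H].
  - pose proof (sqrt_pos y). lra.
  - rewrite <- (sqrt_pow2 x) by lra. apply sqrt_le_1_alt. exact Hx.
Qed.

Lemma cs_bound (v k P Q S : R) : 0 < S -> P^2 + Q^2 = S^2 ->
  (v*P + Q*k)/S <= sqrt (v^2+k^2).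
Proof.
  intros HS HPQ. apply le_sqrt_of_sq. { pose proof (pow2_ge_0 v); pose proof (pow2_ge_0 k); lra. }
  assert (H : (v*P+Q*k)^2 <= S^2 * (v^2+k^2)).
  { rewrite <- HPQ. assert (E: (P^2+Q^2)*(v^2+k^2) - (v*P+Q*k)^2 = (v*Q-P*k)^2) by ring. pose proof (pow2_ge_0 (v*Q-P*k)). lra. }
  replace (((v * P + Q * k) / S) ^ 2) with ((v*P+Q*k)^2 / S^2) by (field; lra).
  apply (Rmult_le_reg_r (S^2)). nra.
  unfold Rdiv. rewrite Rmult_assoc, Rinv_l by nra. nra.
Qed.

Definition Fb (l a y x : R) : R := ln (l^2 * (x - a)^2 * exp (- l * y) + exp (l * y)) / l.

Lemma deriv_bound (l a : R) (cy cx : R -> R) t :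
  0 < l -> ex_derive cy t -> ex_derive cx t ->
  Derive (fun s => Fb l a (cy s) (cx s)) t <=
  sqrt (Derive cy t ^2 + exp (-2 * l * cy t) * Derive cx t ^2).
Proof.
  intros Hl H1 H2. unfold Fb.
  set (E := exp (l * cy t)).
  assert (HE : 0 < E) by apply exp_pos.
  assert (Hm : exp (- l * cy t) = / E).
  { unfold E. rewrite <- exp_Ropp. f_equal. ring. }
  assert (Hm2 : exp (-2 * l * cy t) = (/ E)^2).
  { rewrite <- Hm. simpl. rewrite Rmult_1_r, <- exp_plus. f_equal. ring. }
  set (u := cx t - a). set (v := Derive cy t). set (w := Derive cx t).
  set (B := l^2 * u^2 / E).
  assert (HB : 0 <= B). { unfold B. apply Rmult_le_pos. nra. left; apply Rinv_0_lt_compat; lra. }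
  erewrite is_derive_unique.
  2:{ auto_derive. repeat split; auto.
      apply Rplus_le_lt_0_compat; [|apply exp_pos].
      apply Rmult_le_pos; [|left; apply exp_pos].
      set (z := cx t + - a). apply Rmult_le_pos; nra.
reflexivity. }
  change (Derive (fun x => cx x) t) with w. change (Derive (fun x => cy x) t) with v.
  rewrite Hm2, Hm. fold E.
  replace (v ^ 2 + (/ E) ^ 2 * w ^ 2) with (v^2 + (w/E)^2) by (field; lra).
  match goal with |- ?L <= _ => replace L with ((v * (E - B) + (2*l*u) * (w/E)) / (E + B)) end.
  - apply cs_bound. lra. unfold B. field. lra.
  - unfold B, u. field. split. lra. split. lra.
    set (z := cx t + - a). pose proof (pow2_ge_0 (l*z)). assert (0 < E*E) by nra. nra.
Qed.
Lemma int_bound (g sp : R -> R) :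
  (forall t, ex_derive g t) -> (forall t, continuous sp t) ->
  (forall t, Derive g t <= sp t) -> g 1 - g 0 <= RInt sp 0 1.
Proof.
  intros Hg Hs Hle.
  set (phi := fun t => RInt sp 0 t - g t).
  assert (Hd : forall t, is_derive phi t (sp t - Derive g t)).
  { intro t. unfold phi.
    assert (H1 : is_derive (RInt sp 0) t (sp t)).
    { apply (is_derive_RInt sp (RInt sp 0) 0). apply filter_forall. intro b.
      exact (RInt_correct sp 0 b (ex_RInt_continuous sp 0 b (fun z _ => Hs z))).
      apply Hs. }
    assert (H2 : is_derive g t (Derive g t)) by (apply Derive_correct; apply Hg).
    exact (is_derive_minus _ _ _ _ _ H1 H2). }
  destruct (MVT_gen phi 0 1 (fun t => sp t - Derive g t)) as [c [Hc Heq]].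
  - intros; apply Hd.
  - intros x _. apply continuity_pt_filterlim.
    exact (ex_derive_continuous phi x (ex_intro _ _ (Hd x))).
  - unfold phi in Heq. rewrite RInt_point in Heq.
    pose proof (Hle c). change (zero : R) with 0 in Heq. nra.
Qed.

Lemma sum_lt_zero n f : (forall i, (i < n)%nat -> f i = 0) -> sum_lt n f = 0.
Proof. induction n; cbn [sum_lt]; intros H. reflexivity. rewrite IHn, H; [ring|lia|intros; apply H; lia]. Qed.

Lemma sum_lt_nonneg n f : (forall i, (i < n)%nat -> 0 <= f i) -> 0 <= sum_lt n f.
Proof. induction n; cbn [sum_lt]; intros H. lra. pose proof (H n ltac:(lia)).
  assert (0 <= sum_lt n f) by (apply IHn; intros; apply H; lia). lra. Qed.

Lemma term_le_sum n f j : (forall i, (i < n)%nat -> 0 <= f i) -> (j < n)%nat -> f j <= sum_lt n f.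
Proof. induction n; cbn [sum_lt]; intros H Hj. lia.
  assert (0 <= sum_lt n f) by (apply sum_lt_nonneg; intros; apply H; lia).
  destruct (Nat.eq_dec j n). subst. lra.
  assert (f j <= sum_lt n f) by (apply IHn; [intros; apply H; lia | lia]).
  pose proof (H n ltac:(lia)). lra. Qed.

Lemma sum_lt_le n f c : (forall i, (i < n)%nat -> f i <= c) -> sum_lt n f <= INR n * c.
Proof. induction n; cbn [sum_lt]; intros H. simpl; lra.
  assert (sum_lt n f <= INR n * c) by (apply IHn; intros; apply H; lia).
  pose proof (H n ltac:(lia)). rewrite S_INR. lra. Qed.

Lemma exists_big n f : (1 <= n)%nat -> sum_lt n f = 1 ->
  exists j, (j < n)%nat /\ / INR n <= f j.
Proof.
  intros Hn Hs. destruct n as [|m]. lia.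
  destruct (classic (exists j, (j < S m)%nat /\ / INR (S m) <= f j)) as [H|H]. exact H.
  exfalso.
  assert (Hlt : forall j, (j < S m)%nat -> f j < / INR (S m)).
  { intros j Hj. apply Rnot_le_lt. intro Hc. apply H. exists j. auto. }
  cbn [sum_lt] in Hs.
  assert (sum_lt m f <= INR m * / INR (S m)) by (apply sum_lt_le; intros; left; apply Hlt; lia).
  pose proof (Hlt m ltac:(lia)).
  assert (HS : 0 < INR (S m)) by (apply lt_0_INR; lia).
  assert (INR m * / INR (S m) + / INR (S m) = 1).
  { rewrite S_INR in *. field. lra. }
  lra.
Qed.

Lemma glb_le (E : R -> Prop) L0 : E L0 -> 0 <= L0 -> real (Glb_Rbar E) <= L0.
Proof.
  intros HE H0. destruct (Glb_Rbar_correct E) as [Hlb _].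
  specialize (Hlb L0 HE). destruct (Glb_Rbar E); simpl in *; auto; try lra; contradiction.
Qed.

Lemma glb_ge (E : R -> Prop) L0 b : E L0 -> (forall L, E L -> b <= L) -> b <= real (Glb_Rbar E).
Proof.
  intros HE Hb. destruct (Glb_Rbar_correct E) as [Hlb Hg].
  assert (H1 : Rbar_le (Finite b) (Glb_Rbar E)) by (apply Hg; intros x Hx; simpl; apply Hb; auto).
  specialize (Hlb L0 HE). destruct (Glb_Rbar E); simpl in *; auto; contradiction.
Qed.

Lemma C1_lin a b : Defs.C1 (fun t => a + b * t).
Proof.
  assert (HD : forall t, Derive (fun t => a + b * t) t = b).
  { intro t. apply is_derive_unique. auto_derive; auto. ring. }
  split. intro t. auto_derive. auto.
  intro t. apply (continuous_ext (fun _ => b)). intro; rewrite HD; auto. apply continuous_const.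
Qed.

Lemma C1_const a : Defs.C1 (fun _ => a).
Proof.
  split. intro t. auto_derive. auto.
  intro t. apply (continuous_ext (fun _ => 0)). intro; rewrite Derive_const; auto. apply continuous_const.
Qed.

Lemma cont_sq (f : R -> R) t : continuous f t -> continuous (fun s => f s ^ 2) t.
Proof.
  intro H. apply (continuous_comp f (fun x => x^2)). exact H.
  exact (ex_derive_continuous (fun x : R => x^2) (f t) ltac:(auto_derive; auto)).
Qed.

Lemma cont_mul (f g : R -> R) t : continuous f t -> continuous g t -> continuous (fun s => f s * g s) t.
Proof. intros H1 H2. exact (continuous_mult f g t H1 H2). Qed.

Lemma cont_add (f g : R -> R) t : continuous f t -> continuous g t -> continuous (fun s => f s + g s) t.
Proof. intros H1 H2. exact (continuous_plus f g t H1 H2). Qed.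

Definition speed d lam (cy : R -> R) (cx : nat -> R -> R) t :=
  sqrt ((Derive cy t)^2 +
          sum_lt d (fun i => exp (-2 * lam i * cy t) * (Derive (cx i) t)^2)).

Lemma speed_cont d lam cy cx : Defs.C1 cy -> (forall i, (i < d)%nat -> Defs.C1 (cx i)) ->
  forall t, continuous (speed d lam cy cx) t.
Proof.
  intros [Hy1 Hy2] Hx t. unfold speed. apply continuous_sqrt_comp. apply cont_add.
  apply cont_sq. apply Hy2.
  assert (forall n, (n <= d)%nat -> continuous (fun t => sum_lt n (fun i => exp (-2 * lam i * cy t) * (Derive (cx i) t)^2)) t).
  { induction n; intros Hn; simpl.
    - apply continuous_const.
    - apply cont_add. apply IHn; lia. apply cont_mul.
      + apply (continuous_comp cy (fun y => exp (-2 * lam n * y))).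
        exact (ex_derive_continuous cy t (Hy1 t)).
        exact (ex_derive_continuous (fun y : R => exp (-2 * lam n * y)) (cy t) ltac:(auto_derive; auto)).
      + apply cont_sq. apply (Hx n). lia. }
  apply H. lia.
Qed.

Lemma curve_length_speed d lam cy cx : curve_length d lam cy cx = RInt (speed d lam cy cx) 0 1.
Proof. reflexivity. Qed.

Lemma Fb_ex_derive (l a : R) (cy cx : R -> R) t :
  ex_derive cy t -> ex_derive cx t -> ex_derive (fun s => Fb l a (cy s) (cx s)) t.
Proof.
  intros H1 H2. unfold Fb. auto_derive. repeat split; auto.
  apply Rplus_le_lt_0_compat; [|apply exp_pos].
  apply Rmult_le_pos; [|left; apply exp_pos].
  set (z := cx t + - a). apply Rmult_le_pos; nra.
Qed.

Lemma vert_curve d lam (p p' : point) s :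
  0 <= s -> py p' = py p + s -> (forall i, (i < d)%nat -> px p' i = px p i) ->
  rdist d lam p p' <= s.
Proof.
  intros Hs Hy Hx. unfold rdist. apply glb_le; [|lra].
  exists (fun t => py p + s * t), (fun i t => px p i). split.
  - split. apply C1_lin. split. intros; apply C1_const. split. ring. split. rewrite Hy; ring.
    intros i Hi. split. reflexivity. symmetry; apply Hx; auto.
  - rewrite curve_length_speed. rewrite (RInt_ext _ (fun _ => s)).
    + rewrite RInt_const. unfold scal; simpl. unfold mult; simpl. ring.
    + intros x _. unfold speed.
      assert (HD : Derive (fun t => py p + s * t) x = s).
      { apply is_derive_unique. auto_derive; auto. ring. }
      rewrite HD. rewrite sum_lt_zero. rewrite Rplus_0_r, sqrt_pow2; auto.
      intros i _. rewrite Derive_const. ring.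
Qed.

Theorem mainTheorem7 (d : nat) (lam : nat -> R) :
  (1 <= d)%nat ->
  (forall i, (i < d)%nat -> 0 < lam i) ->
  (forall i j, (i <= j)%nat -> (j < d)%nat -> lam i <= lam j) ->
  exists C : R, 0 < C /\
    forall (p p' q q' : point) (y : R),
      on_ray d p p' -> on_ray d q q' ->
      h p' = y -> h q' = y ->
      hdist d lam y p' q' = 1 ->
      rdist d lam p p' + rdist d lam q q' <= rdist d lam p q + C.
Proof.
  intros Hd Hpos _.
  set (K := sum_lt d (fun j => Rabs (ln (lam j ^ 2 / INR d) / lam j))).
  assert (HK : 0 <= K) by (apply sum_lt_nonneg; intros; apply Rabs_pos).
  exists (1 + K). split. lra.
  intros p p' q q' y [s [Hs [Hsy Hsx]]] [t [Ht [Hty Htx]]] Hp'y Hq'y Hdist.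
  unfold h in *.
  assert (U1 : rdist d lam p p' <= s) by (apply vert_curve; auto).
  assert (U2 : rdist d lam q q' <= t) by (apply vert_curve; auto).
  set (S := sum_lt d (fun i => exp (-2 * lam i * y) * (px p' i - px q' i)^2)).
  assert (HS0 : 0 <= S).
  { apply sum_lt_nonneg. intros. apply Rmult_le_pos. left; apply exp_pos. apply pow2_ge_0. }
  assert (HS1 : S = 1).
  { unfold hdist, hnorm in Hdist. fold S in Hdist.
    rewrite <- (sqrt_sqrt S HS0), Hdist. ring. }
  destruct (exists_big d _ Hd HS1) as [j [Hj Hbig]]. cbv beta in Hbig.
  set (l := lam j) in *. set (a := px p j).
  assert (Hl : 0 < l) by (apply Hpos; auto).
  assert (HdR : 0 < INR d) by (apply lt_0_INR; lia).
  assert (L : s + t + ln (l^2 / INR d) / l <= rdist d lam p q).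
  { unfold rdist.
    apply (glb_ge _ (curve_length d lam (fun τ => py p + (py q - py p) * τ)
                       (fun i τ => px p i + (px q i - px p i) * τ))).
    - exists (fun τ => py p + (py q - py p) * τ), (fun i τ => px p i + (px q i - px p i) * τ).
      split; [|reflexivity].
      split. apply C1_lin. split. intros; apply C1_lin. split. ring. split. ring.
      intros i Hi. split; ring.
    - intros L [cy [cx [[Hcy [Hcx [H0 [H1 Hx]]]] HL]]]. subst L. rewrite curve_length_speed.
      destruct (Hx j Hj) as [Hx0 Hx1].
      assert (Hcxj : Defs.C1 (cx j)) by (apply Hcx; auto).
      eapply Rle_trans; [|apply (int_bound (fun τ => Fb l a (cy τ) (cx j τ)))].
      + cbv beta. rewrite H0, H1, Hx0, Hx1. fold a.
        assert (Fp : Fb l a (py p) a = py p).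
        { unfold Fb. replace (l ^ 2 * (a - a) ^ 2 * exp (- l * py p) + exp (l * py p))
            with (exp (l * py p)) by ring. rewrite ln_exp. field. lra. }
        rewrite Fp.
        assert (Fq : (ln (l^2 / INR d) + l * (y + t)) / l <= Fb l a (py q) (px q j)).
        { unfold Fb. unfold Rdiv at 1 3. apply Rmult_le_compat_r. left; apply Rinv_0_lt_compat; lra.
          assert (Hpos1 : 0 < l ^ 2 / INR d) by (apply Rdiv_lt_0_compat; nra).
          rewrite <- (ln_exp (l * (y + t))), <- ln_mult; [|auto|apply exp_pos].
          apply ln_le. apply Rmult_lt_0_compat; auto; apply exp_pos.
          assert (Hq : py q = y - t) by lra.
          assert (He : exp (- l * py q) = exp (-2 * l * y) * exp (l * (y + t))).
          { rewrite <- exp_plus. f_equal. rewrite Hq. ring. }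
          assert (Hu : (px q j - a) ^ 2 = (px p' j - px q' j) ^ 2).
          { unfold a. rewrite Hsx, Htx by auto. ring. }
          rewrite He, Hu.
          pose proof (exp_pos (l * py q)). pose proof (exp_pos (l * (y + t))).
          assert (l ^ 2 / INR d * exp (l * (y + t)) <=
                  l ^ 2 * (exp (-2 * l * y) * (px p' j - px q' j) ^ 2) * exp (l * (y + t))).
          { apply Rmult_le_compat_r. lra. unfold Rdiv. apply Rmult_le_compat_l. nra. exact Hbig. }
          nra. }
        assert (Hsq : py p = y - s) by lra.
        replace ((ln (l ^ 2 / INR d) + l * (y + t)) / l) with (ln (l ^ 2 / INR d) / l + (y + t)) in Fq
          by (field; lra).
        lra.
      + intro τ. apply Fb_ex_derive. apply Hcy. apply Hcxj.
      + apply speed_cont; auto.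
      + intro τ. eapply Rle_trans. apply deriv_bound; auto. apply Hcy. apply Hcxj.
        unfold speed. apply sqrt_le_1_alt. apply Rplus_le_compat_l.
        apply (term_le_sum d (fun i => exp (-2 * lam i * cy τ) * Derive (cx i) τ ^ 2) j); auto.
        intros. apply Rmult_le_pos. left; apply exp_pos. apply pow2_ge_0. }
  assert (HjK : Rabs (ln (l ^ 2 / INR d) / l) <= K).
  { apply (term_le_sum d (fun j => Rabs (ln (lam j ^ 2 / INR d) / lam j)) j); auto.
    intros; apply Rabs_pos. }
  pose proof (Rabs_maj2 (ln (l ^ 2 / INR d) / l)). lra.
Qed.
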